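(* Let $\mathcal P$ and $\mathrm{conv}(\mathcal P)$ be as in the context. Let $\mathcal S\subseteq[1,\min\{L,T-2,\lfloor(\overline C-\overline V)/V\rfloor\}]_{\mathbb Z}$ and let $\eta$ be a real number with $0\le\eta\le\min\{L,(\overline C-\overline V)/V\}$. For any $t\in[2,T]_{\mathbb Z}$ with $t\ge s+2$ for all $s\in\mathcal S$, the inequality $$x_t\le(\overline V+\eta V)y_t+(\overline C-\overline V-\eta V)y_{t-1}-\sum_{s\in\mathcal S}(\overline C-\overline V-sV)(y_{t-s}-y_{t-s-1})\qquad(\ast)$$ is valid for $\mathrm{conv}(\mathcal P)$. For any $t\in[1,T-1]_{\mathbb Z}$ with $t\le T-s-1$ for all $s\in\mathcal S$, the inequality $$x_t\le(\overline V+\eta V)y_t+(\overline C-\overline V-\eta V)y_{t+1}-\sum_{s\in\mathcal S}(\overline C-\overline V-sV)(y_{t+s}-y_{t+s+1})\qquad(\ast\ast)$$ is valid for $\mathrm{conv}(\mathcal P)$. Furthermore, $(\ast)$ and $(\ast\ast)$ are facet-defining for $\mathrm{conv}(\mathcal P)$ when $\eta\in\{0,(\overline C-\overline V)/V\}$ or $\eta=L\in\mathcal S$.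
   Context: For integers $a,b$, $[a,b]_{\mathbb Z}=\{a,a+1,\dots,b\}$ if $a\le b$ and $\emptyset$ otherwise. Fix a positive integer $T$, positive integers $L$ (minimum up time) and $\ell$ (minimum down time), and reals $\overline C,\underline C,V,\overline V$ with $\overline C>\underline C>0$, $V>0$, $\overline V+V\le\overline C$ and $\underline C<\overline V<\underline C+V$. $\mathcal P$ is the set of $(\mathbf x,\mathbf y)=((x_1,\dots,x_T),(y_1,\dots,y_T))\in\mathbb R_+^T\times\{0,1\}^T$ satisfying: (i) $-y_{t-1}+y_t-y_k\le 0$ for all $t\in[2,T]_{\mathbb Z}$, $k\in[t,\min\{T,t+L-1\}]_{\mathbb Z}$; (ii) $y_{t-1}-y_t+y_k\le 1$ for all $t\in[2,T]_{\mathbb Z}$, $k\in[t,\min\{T,t+\ell-1\}]_{\mathbb Z}$; (iii) $-x_t+\underline C y_t\le 0$ and $x_t-\overline C y_t\le 0$ for all $t\in[1,T]_{\mathbb Z}$; (iv) $x_t-x_{t-1}\le Vy_{t-1}+\overline V(1-y_{t-1})$ for all $t\in[2,T]_{\mathbb Z}$; (v) $x_{t-1}-x_t\le Vy_t+\overline V(1-y_t)$ for all $t\in[2,T]_{\mathbb Z}$. $\mathrm{conv}(\mathcal P)\subseteq\mathbb R^{2T}$ is its convex hull. A linear inequality is valid for $\mathrm{conv}(\mathcal P)$ if all its points satisfy it, and facet-defining if moreover the set of points of $\mathrm{conv}(\mathcal P)$ satisfying it with equality has dimension $\dim\mathrm{conv}(\mathcal P)-1$. *)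

(* Defs.v *)
From Stdlib Require Import Reals Lra Lia List.
Open Scope R_scope.

(* A point of R^{2T} is encoded as a pair (x, y) of functions nat -> R whose
   coordinates x_t, y_t for t in [1,T] are the meaningful ones; points of the
   set P (and hence of conv P) are required to vanish outside [1,T], so the
   set of such pairs is a faithful copy of R^T x R^T. *)
Definition point := ((nat -> R) * (nat -> R))%type.

Definition inP (T L l : nat) (Cb Cu V Vb : R) (z : point) : Prop :=
  let x := fst z in let y := snd z in
  (forall t, (t < 1 \/ T < t)%nat -> x t = 0 /\ y t = 0) /\
  (forall t, (1 <= t <= T)%nat -> 0 <= x t /\ (y t = 0 \/ y t = 1)) /\
  (* (i) minimum up time *)
  (forall t k, (2 <= t <= T)%nat -> (t <= k <= Nat.min T (t + L - 1))%nat ->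
      - y (t - 1)%nat + y t - y k <= 0) /\
  (* (ii) minimum down time *)
  (forall t k, (2 <= t <= T)%nat -> (t <= k <= Nat.min T (t + l - 1))%nat ->
      y (t - 1)%nat - y t + y k <= 1) /\
  (forall t, (1 <= t <= T)%nat -> - x t + Cu * y t <= 0 /\ x t - Cb * y t <= 0) /\
  (forall t, (2 <= t <= T)%nat ->
      x t - x (t - 1)%nat <= V * y (t - 1)%nat + Vb * (1 - y (t - 1)%nat)) /\
  (forall t, (2 <= t <= T)%nat ->
      x (t - 1)%nat - x t <= V * y t + Vb * (1 - y t)).

(* Convex hull of a set of points: finite convex combinations
   (sum_f_R0 f k = f 0 + ... + f k). *)
Definition conv (A : point -> Prop) (z : point) : Prop :=
  exists (k : nat) (lam : nat -> R) (p : nat -> point),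
    (forall i, (i <= k)%nat -> 0 <= lam i /\ A (p i)) /\
    sum_f_R0 lam k = 1 /\
    (forall t, fst z t = sum_f_R0 (fun i => lam i * fst (p i) t) k /\
               snd z t = sum_f_R0 (fun i => lam i * snd (p i) t) k).

Definition aff_indep (p : nat -> point) (k : nat) : Prop :=
  forall lam : nat -> R,
    sum_f_R0 lam k = 0 ->
    (forall t, sum_f_R0 (fun i => lam i * fst (p i) t) k = 0 /\
               sum_f_R0 (fun i => lam i * snd (p i) t) k = 0) ->
    forall i, (i <= k)%nat -> lam i = 0.

Definition affdim (A : point -> Prop) (d : nat) : Prop :=
  (exists p : nat -> point, (forall i, (i <= d)%nat -> A (p i)) /\ aff_indep p d) /\
  (forall p : nat -> point, (forall i, (i <= Datatypes.S d)%nat -> A (p i)) -> ~ aff_indep p (Datatypes.S d)).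

Definition valid (C : point -> Prop) (lhs rhs : point -> R) : Prop :=
  forall z, C z -> lhs z <= rhs z.

Definition facet_defining (C : point -> Prop) (lhs rhs : point -> R) : Prop :=
  valid C lhs rhs /\
  exists d : nat, affdim C (Datatypes.S d) /\ affdim (fun z => C z /\ lhs z = rhs z) d.

(* sum over the list of s in S (S is duplicate-free) *)
Definition lsum (Sl : list nat) (f : nat -> R) : R :=
  fold_right (fun s acc => f s + acc) 0 Sl.

Definition rhs_back (Cb V Vb eta : R) (Sl : list nat) (t : nat) (z : point) : R :=
  let y := snd z in
  (Vb + eta * V) * y t + (Cb - Vb - eta * V) * y (t - 1)%nat
  - lsum Sl (fun s => (Cb - Vb - INR s * V) * (y (t - s)%nat - y (t - s - 1)%nat)).

Definition rhs_fwd (Cb V Vb eta : R) (Sl : list nat) (t : nat) (z : point) : R :=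
  let y := snd z in
  (Vb + eta * V) * y t + (Cb - Vb - eta * V) * y (t + 1)%nat
  - lsum Sl (fun s => (Cb - Vb - INR s * V) * (y (t + s)%nat - y (t + s + 1)%nat)).

(* Main.v *)
Require Import Defs.
From Stdlib Require Import Reals List ZArith Lra Lia Classical.
Open Scope R_scope.

Lemma sum_single (g : nat -> R) (n j : nat) : (j <= n)%nat ->
  (forall i, (i <= n)%nat -> i <> j -> g i = 0) -> sum_f_R0 g n = g j.
Proof.
  induction n as [|n IH]; intros Hj H.
  - assert (j = 0)%nat by lia; subst; reflexivity.
  - cbn [sum_f_R0]. destruct (Nat.eq_dec j (S n)) as [->|Hne].
    + rewrite sum_eq_R0. lra. intros i Hi. apply H; lia.
    + rewrite IH by (try lia; intros; apply H; lia). rewrite (H (S n)) by lia. lra.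
Qed.

Lemma sum_upd (g : nat -> R) (n i0 : nat) (a : R) : (i0 <= n)%nat ->
  sum_f_R0 (fun i => if Nat.eqb i i0 then a else g i) n = sum_f_R0 g n + (a - g i0).
Proof.
  induction n as [|n IH]; intros Hi.
  - assert (i0 = 0)%nat by lia; subst. simpl. lra.
  - cbn [sum_f_R0]. destruct (Nat.eq_dec i0 (S n)) as [->|Hne].
    + rewrite Nat.eqb_refl. rewrite (sum_eq _ g).
      * lra.
      * intros i Hi'. destruct (Nat.eqb_spec i (S n)); [lia|reflexivity].
    + rewrite IH by lia. destruct (Nat.eqb_spec (S n) i0); [lia|]. lra.
Qed.

Definition LinF (f : point -> R) : Prop :=
  forall (n : nat) (lam : nat -> R) (p : nat -> point),
   (forall k, sum_f_R0 (fun i => lam i * fst (p i) k) n = 0 /\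
              sum_f_R0 (fun i => lam i * snd (p i) k) n = 0) ->
   sum_f_R0 (fun i => lam i * f (p i)) n = 0.

Lemma tri (p : nat -> point) (n : nat) (f : nat -> point -> R) :
  (forall j, (1 <= j <= n)%nat -> LinF (f j)) ->
  (forall j, (1 <= j <= n)%nat -> f j (p 0%nat) = 0) ->
  (forall i j, (1 <= i)%nat -> (i < j)%nat -> (j <= n)%nat -> f j (p i) = 0) ->
  (forall j, (1 <= j <= n)%nat -> f j (p j) <> 0) ->
  aff_indep p n.
Proof.
  intros Hlin H0 Hlow Hdiag lam Hsum Hco.
  assert (Hz : forall m j, (n - m < j <= n)%nat -> lam j = 0).
  { induction m as [|m IH]; intros j Hj. lia.
    destruct (Nat.eq_dec j (n - m)) as [->|Hne]; [|apply IH; lia].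
    assert (Hl := Hlin (n-m)%nat ltac:(lia) n lam p Hco).
    rewrite (sum_single _ n (n-m)) in Hl.
    - apply Rmult_integral in Hl. destruct Hl as [Hl|Hl]; [assumption|].
      exfalso; apply (Hdiag (n-m)%nat); [lia|exact Hl].
    - lia.
    - intros i Hi Hne. destruct (Nat.eq_dec i 0) as [->|Hi0].
      + rewrite H0 by lia; ring.
      + destruct (lt_dec i (n-m)) as [Hlt|Hge].
        * rewrite Hlow by lia; ring.
        * rewrite IH by lia; ring. }
  intros i Hi. destruct (Nat.eq_dec i 0) as [->|Hi0].
  - rewrite (sum_single lam n 0) in Hsum; [exact Hsum|lia|].
    intros j Hj Hj0. apply (Hz n); lia.
  - apply (Hz n); lia.
Qed.

Lemma dep : forall N M (v : nat -> nat -> R), (N <= M)%nat ->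
  exists lam : nat -> R, (exists i, (i <= M)%nat /\ lam i <> 0) /\
    forall c, (c < N)%nat -> sum_f_R0 (fun i => lam i * v i c) M = 0.
Proof.
  induction N as [|N IH]; intros M v HNM.
  - exists (fun _ => 1). split. exists 0%nat. split; [lia|lra]. intros; lia.
  - destruct (classic (exists i0, (i0 <= M)%nat /\ v i0 N <> 0)) as [[i0 [Hi0 Hv]]|Hno].
    + destruct M as [|M']; [lia|].
      set (w := fun i c => v i c - (v i N / v i0 N) * v i0 c).
      set (w' := fun i => if Nat.eqb i i0 then w (S M') else w i).
      destruct (IH M' w' ltac:(lia)) as [mu [[j [Hj Hmu]] Hrel]].
      set (lam' := fun i => if Nat.eqb i (S M') then (if Nat.eqb i0 (S M') then 0 else mu i0)
                            else if Nat.eqb i i0 then 0 else mu i).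
      set (K := - sum_f_R0 (fun i => lam' i * (v i N / v i0 N)) (S M')).
      set (lam := fun i => if Nat.eqb i i0 then K else lam' i).
      assert (Hl0 : lam' i0 = 0).
      { unfold lam'. destruct (Nat.eqb_spec i0 (S M')); [reflexivity|].
        rewrite Nat.eqb_refl. reflexivity. }
      assert (E1 : forall c, sum_f_R0 (fun i => lam i * v i c) (S M') =
                             sum_f_R0 (fun i => lam' i * w i c) (S M')).
      { intros c.
        rewrite (sum_eq (fun i => lam i * v i c)
                   (fun i => if Nat.eqb i i0 then K * v i0 c else lam' i * v i c)).
        2:{ intros i _. unfold lam. destruct (Nat.eqb_spec i i0); [subst; reflexivity|reflexivity]. }
        rewrite sum_upd by lia. rewrite Hl0.
        unfold w. rewrite (sum_eq (fun i => lam' i * (v i c - v i N / v i0 N * v i0 c))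
                   (fun i => lam' i * v i c - (lam' i * (v i N / v i0 N)) * v i0 c)).
        2:{ intros; ring. }
        rewrite minus_sum. rewrite <- (scal_sum (fun i => lam' i * (v i N / v i0 N))).
        unfold K. ring_simplify. ring. }
      assert (E2 : forall c, sum_f_R0 (fun i => lam' i * w i c) (S M') =
                             sum_f_R0 (fun i => mu i * w' i c) M').
      { intros c. cbn [sum_f_R0].
        assert (HlM : lam' (S M') = if Nat.eqb i0 (S M') then 0 else mu i0).
        { unfold lam'. rewrite Nat.eqb_refl. reflexivity. }
        rewrite HlM.
        destruct (Nat.eq_dec i0 (S M')) as [He|Hne].
        - rewrite (proj2 (Nat.eqb_eq _ _) He). rewrite Rmult_0_l, Rplus_0_r.
          apply sum_eq. intros i Hi. unfold lam', w'.
          rewrite (proj2 (Nat.eqb_neq i (S M'))) by lia.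
          rewrite (proj2 (Nat.eqb_neq i i0)) by lia. reflexivity.
        - rewrite (proj2 (Nat.eqb_neq i0 (S M'))) by lia.
          rewrite (sum_eq (fun i => lam' i * w i c)
                     (fun i => if Nat.eqb i i0 then 0 else mu i * w i c)).
          2:{ intros i Hi. unfold lam'. rewrite (proj2 (Nat.eqb_neq i (S M'))) by lia.
              destruct (Nat.eqb i i0); [ring|reflexivity]. }
          rewrite sum_upd by lia.
          rewrite (sum_eq (fun i => mu i * w' i c)
                     (fun i => if Nat.eqb i i0 then mu i0 * w (S M') c else mu i * w i c)).
          2:{ intros i Hi. unfold w'. destruct (Nat.eqb_spec i i0); [subst; reflexivity|reflexivity]. }
          rewrite sum_upd by lia. ring. }
      exists lam. split.
      * destruct (Nat.eq_dec j i0) as [->|Hji].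
        -- exists (S M'). split; [lia|]. unfold lam.
           destruct (Nat.eqb_spec (S M') i0); [lia|]. unfold lam'. rewrite Nat.eqb_refl.
           destruct (Nat.eqb_spec i0 (S M')); [lia|]. exact Hmu.
        -- exists j. split; [lia|]. unfold lam. destruct (Nat.eqb_spec j i0); [lia|].
           unfold lam'. destruct (Nat.eqb_spec j (S M')); [lia|].
           destruct (Nat.eqb_spec j i0); [lia|]. exact Hmu.
      * intros c Hc. rewrite E1.
        destruct (Nat.eq_dec c N) as [->|HcN].
        -- apply sum_eq_R0. intros i _. unfold w. field_simplify; [ring|exact Hv].
        -- rewrite E2. apply Hrel. lia.
    + destruct (IH M v ltac:(lia)) as [lam [Hnz Hrel]].
      exists lam. split; [exact Hnz|]. intros c Hc.
      destruct (Nat.eq_dec c N) as [->|HcN].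
      * apply sum_eq_R0. intros i Hi.
        destruct (Req_dec (v i N) 0) as [E|E]; [rewrite E; ring|].
        exfalso; apply Hno; exists i; auto.
      * apply Hrel; lia.
Qed.

Definition Vanish (T : nat) (z : point) : Prop :=
  forall k, (k < 1 \/ T < k)%nat -> fst z k = 0 /\ snd z k = 0.

Definition LinY (r : point -> R) : Prop :=
  forall (n : nat) (lam : nat -> R) (p : nat -> point) (z : point),
    (forall k, snd z k = sum_f_R0 (fun i => lam i * snd (p i) k) n) ->
    r z = sum_f_R0 (fun i => lam i * r (p i)) n.

Definition zpt : point := (fun _ => 0, fun _ => 0).

Lemma LinY_zero r : LinY r -> forall n lam p,
  (forall k, sum_f_R0 (fun i => lam i * snd (p i) k) n = 0) ->
  sum_f_R0 (fun i => lam i * r (p i)) n = 0.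
Proof.
  intros H n lam p Hs.
  rewrite <- (H n lam p zpt). 2:{ intros k; simpl; rewrite Hs; reflexivity. }
  rewrite (H 0%nat (fun _ => 0) p zpt). simpl; ring. intros; simpl; ring.
Qed.

Lemma U1 (T : nat) (A : point -> Prop) (p : nat -> point) (n : nat) :
  (2 * T + 1 <= n)%nat -> (forall z, A z -> Vanish T z) ->
  (forall i, (i <= n)%nat -> A (p i)) -> ~ aff_indep p n.
Proof.
  intros Hn HV HA Hind.
  set (v := fun i c => if Nat.eqb c 0 then 1 else if Nat.leb c T then fst (p i) c
                       else snd (p i) (c - T)%nat).
  destruct (dep (2 * T + 1) n v Hn) as [lam [[i [Hi Hl]] Hrel]].
  apply Hl. apply (Hind lam); [|intros t|exact Hi].
  - rewrite <- (Hrel 0%nat) by lia. apply sum_eq. intros j _. unfold v. simpl. ring.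
  - destruct (le_lt_dec 1 t); destruct (le_lt_dec t T).
    + split.
      * rewrite <- (Hrel t) by lia. apply sum_eq. intros j _. unfold v.
        rewrite (proj2 (Nat.eqb_neq t 0)) by lia. rewrite (proj2 (Nat.leb_le t T)) by lia. reflexivity.
      * rewrite <- (Hrel (t + T)%nat) by lia. apply sum_eq. intros j _. unfold v.
        rewrite (proj2 (Nat.eqb_neq (t+T) 0)) by lia. rewrite (proj2 (Nat.leb_nle (t+T) T)) by lia.
        replace (t + T - T)%nat with t by lia. reflexivity.
    + split; apply sum_eq_R0; intros j Hj; destruct (HV _ (HA j Hj) t) as [E1 E2]; try lia;
        [rewrite E1|rewrite E2]; ring.
    + split; apply sum_eq_R0; intros j Hj; destruct (HV _ (HA j Hj) t) as [E1 E2]; try lia;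
        [rewrite E1|rewrite E2]; ring.
    + lia.
Qed.

Definition sig (t j : nat) : nat := if Nat.ltb j t then j else S j.
Definition tau (t k : nat) : nat := if Nat.ltb k t then k else (k - 1)%nat.

Lemma sig_tau t k : k <> t -> sig t (tau t k) = k.
Proof.
  intros H. unfold sig, tau. destruct (Nat.ltb_spec k t).
  - rewrite (proj2 (Nat.ltb_lt k t)) by lia. reflexivity.
  - rewrite (proj2 (Nat.ltb_nlt (k-1) t)) by lia. lia.
Qed.

Lemma U2 (T t : nat) (r : point -> R) (A : point -> Prop) (p : nat -> point) (n : nat) :
  (1 <= t <= T)%nat -> LinY r ->
  (2 * T <= n)%nat -> (forall z, A z -> Vanish T z /\ fst z t = r z) ->
  (forall i, (i <= n)%nat -> A (p i)) -> ~ aff_indep p n.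
Proof.
  intros Ht Hr Hn HV HA Hind.
  set (v := fun i c => if Nat.eqb c 0 then 1 else if Nat.leb c T then snd (p i) c
                       else fst (p i) (sig t (c - T))).
  destruct (dep (2 * T) n v Hn) as [lam [[i [Hi Hl]] Hrel]].
  assert (Hy : forall k, sum_f_R0 (fun i => lam i * snd (p i) k) n = 0).
  { intros k. destruct (le_lt_dec 1 k); destruct (le_lt_dec k T).
    - rewrite <- (Hrel k) by lia. apply sum_eq. intros j _. unfold v.
      rewrite (proj2 (Nat.eqb_neq k 0)) by lia. rewrite (proj2 (Nat.leb_le k T)) by lia. reflexivity.
    - apply sum_eq_R0; intros j Hj; destruct (proj1 (HV _ (HA j Hj)) k) as [E1 E2]; try lia;
        rewrite E2; ring.
    - apply sum_eq_R0; intros j Hj; destruct (proj1 (HV _ (HA j Hj)) k) as [E1 E2]; try lia;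
        rewrite E2; ring.
    - lia. }
  apply Hl. apply (Hind lam); [|intros k|exact Hi].
  - rewrite <- (Hrel 0%nat) by lia. apply sum_eq. intros j _. unfold v. simpl. ring.
  - split; [|apply Hy].
    destruct (le_lt_dec 1 k); destruct (le_lt_dec k T).
    + destruct (Nat.eq_dec k t) as [->|Hkt].
      * rewrite (sum_eq _ (fun j => lam j * r (p j))).
        -- apply LinY_zero; auto.
        -- intros j Hj. rewrite (proj2 (HV _ (HA j Hj))). reflexivity.
      * assert (Htau : (1 <= tau t k <= T - 1)%nat) by (unfold tau; destruct (Nat.ltb_spec k t); lia).
        rewrite <- (Hrel (T + tau t k)%nat) by lia. apply sum_eq. intros j _. unfold v.
        rewrite (proj2 (Nat.eqb_neq (T + tau t k) 0)) by lia.
        rewrite (proj2 (Nat.leb_nle (T + tau t k) T)) by lia.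
        replace (T + tau t k - T)%nat with (tau t k) by lia. rewrite sig_tau by lia. reflexivity.
    + apply sum_eq_R0; intros j Hj; destruct (proj1 (HV _ (HA j Hj)) k) as [E1 E2]; try lia;
        rewrite E1; ring.
    + apply sum_eq_R0; intros j Hj; destruct (proj1 (HV _ (HA j Hj)) k) as [E1 E2]; try lia;
        rewrite E1; ring.
    + lia.
Qed.

Lemma inP_conv T L l Cb Cu V Vb z : inP T L l Cb Cu V Vb z -> conv (inP T L l Cb Cu V Vb) z.
Proof.
  intros H. exists 0%nat, (fun _ => 1), (fun _ => z). split; [|split].
  - intros i _. split; [lra|exact H].
  - simpl; ring.
  - intros t; simpl; split; ring.
Qed.

Lemma inP_vanish T L l Cb Cu V Vb z : inP T L l Cb Cu V Vb z -> Vanish T z.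
Proof. intros H k Hk. exact (proj1 H k Hk). Qed.

Lemma conv_vanish T (A : point -> Prop) z : (forall w, A w -> Vanish T w) -> conv A z -> Vanish T z.
Proof.
  intros HA [k [lam [p [H1 [H2 H3]]]]] j Hj.
  destruct (H3 j) as [E1 E2]. rewrite E1, E2. split; apply sum_eq_R0; intros i Hi;
  destruct (HA _ (proj2 (H1 i Hi)) j Hj) as [F1 F2]; [rewrite F1|rewrite F2]; ring.
Qed.

Lemma valid_conv (A : point -> Prop) (t : nat) (r : point -> R) :
  LinY r -> (forall z, A z -> fst z t <= r z) -> valid (conv A) (fun z => fst z t) r.
Proof.
  intros Hr HA z [k [lam [p [H1 [H2 H3]]]]].
  rewrite (proj1 (H3 t)). rewrite (Hr k lam p z) by (intros j; exact (proj2 (H3 j))).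
  apply sum_Rle. intros i Hi. destruct (H1 i Hi) as [Hl HAp].
  apply Rmult_le_compat_l; [exact Hl|apply HA; exact HAp].
Qed.

Lemma lsum_le (Sl : list nat) f g : (forall s, In s Sl -> f s <= g s) -> lsum Sl f <= lsum Sl g.
Proof.
  induction Sl as [|a Sl IH]; intros H; simpl. lra.
  apply Rplus_le_compat. apply H; left; auto. apply IH; intros; apply H; right; auto.
Qed.

Lemma lsum_ext (Sl : list nat) f g : (forall s, In s Sl -> f s = g s) -> lsum Sl f = lsum Sl g.
Proof.
  induction Sl as [|a Sl IH]; intros H; simpl. lra.
  rewrite H by (left; auto). rewrite IH; auto. intros; apply H; right; auto.
Qed.

Lemma lsum_zero (Sl : list nat) : lsum Sl (fun _ => 0) = 0.
Proof. induction Sl; simpl; [lra|rewrite IHSl; lra]. Qed.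

Lemma lsum_ind (Sl : list nat) s0 c : NoDup Sl -> In s0 Sl ->
  lsum Sl (fun s => if Nat.eqb s s0 then c else 0) = c.
Proof.
  induction Sl as [|a Sl IH]; intros Hnd Hin; simpl. destruct Hin.
  inversion Hnd; subst. destruct Hin as [->|Hin].
  - rewrite Nat.eqb_refl. rewrite (lsum_ext _ _ (fun _ => 0)). rewrite lsum_zero. ring.
    intros s Hs. destruct (Nat.eqb_spec s s0); [subst; contradiction|reflexivity].
  - destruct (Nat.eqb_spec a s0); [subst; contradiction|]. rewrite IH; auto. ring.
Qed.

Lemma lsum_ind_notin (Sl : list nat) s0 c : ~ In s0 Sl ->
  lsum Sl (fun s => if Nat.eqb s s0 then c else 0) = 0.
Proof.
  intros H. rewrite (lsum_ext _ _ (fun _ => 0)). apply lsum_zero.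
  intros s Hs. destruct (Nat.eqb_spec s s0); [subst; contradiction|reflexivity].
Qed.

Lemma lsum_sum (Sl : list nat) (n : nat) (lam : nat -> R) (g : nat -> nat -> R) :
  lsum Sl (fun s => sum_f_R0 (fun i => lam i * g i s) n) =
  sum_f_R0 (fun i => lam i * lsum Sl (g i)) n.
Proof.
  induction Sl as [|a Sl IH]; simpl.
  - symmetry; apply sum_eq_R0; intros; ring.
  - rewrite IH. rewrite <- sum_plus. apply sum_eq. intros; ring.
Qed.

Lemma sum_lin3 (n : nat) (lam u v w : nat -> R) (a b : R) :
  sum_f_R0 (fun i => lam i * (a * u i + b * v i - w i)) n =
  a * sum_f_R0 (fun i => lam i * u i) n + b * sum_f_R0 (fun i => lam i * v i) n
  - sum_f_R0 (fun i => lam i * w i) n.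
Proof. induction n as [|n IH]; cbn [sum_f_R0]; [|rewrite IH]; ring. Qed.

Lemma sum_lin2 (n : nat) (lam u v : nat -> R) (c : R) :
  sum_f_R0 (fun i => lam i * (c * (u i - v i))) n =
  c * (sum_f_R0 (fun i => lam i * u i) n - sum_f_R0 (fun i => lam i * v i) n).
Proof. induction n as [|n IH]; cbn [sum_f_R0]; [|rewrite IH]; ring. Qed.

Lemma LinY_back Cb V Vb eta Sl t : LinY (rhs_back Cb V Vb eta Sl t).
Proof.
  intros n lam p z Hz. unfold rhs_back.
  rewrite sum_lin3. rewrite <- !Hz. f_equal.
  rewrite <- lsum_sum. apply lsum_ext. intros s _. rewrite sum_lin2. rewrite <- !Hz. reflexivity.
Qed.

Lemma LinY_fwd Cb V Vb eta Sl t : LinY (rhs_fwd Cb V Vb eta Sl t).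
Proof.
  intros n lam p z Hz. unfold rhs_fwd.
  rewrite sum_lin3. rewrite <- !Hz. f_equal.
  rewrite <- lsum_sum. apply lsum_ext. intros s _. rewrite sum_lin2. rewrite <- !Hz. reflexivity.
Qed.

Definition runpt (a b : nat) (f : nat -> R) : point :=
  (fun k => if andb (Nat.leb a k) (Nat.leb k b) then f k else 0,
   fun k => if andb (Nat.leb a k) (Nat.leb k b) then 1 else 0).

Lemma run_in a b f k : (a <= k <= b)%nat -> fst (runpt a b f) k = f k /\ snd (runpt a b f) k = 1.
Proof.
  intros H. unfold runpt; simpl. rewrite (proj2 (Nat.leb_le a k)) by lia.
  rewrite (proj2 (Nat.leb_le k b)) by lia. simpl; auto.
Qed.

Lemma run_out a b f k : ~ (a <= k <= b)%nat -> fst (runpt a b f) k = 0 /\ snd (runpt a b f) k = 0.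
Proof.
  intros H. unfold runpt; simpl.
  destruct (Nat.leb_spec a k); destruct (Nat.leb_spec k b); simpl; auto; lia.
Qed.

Ltac runcase a b f k :=
  let H := fresh in let H' := fresh in
  destruct (le_lt_dec a k); destruct (le_lt_dec k b);
  [ destruct (run_in a b f k ltac:(lia)) as [H H']; rewrite ?H, ?H' in *
  | destruct (run_out a b f k ltac:(lia)) as [H H']; rewrite ?H, ?H' in *
  | destruct (run_out a b f k ltac:(lia)) as [H H']; rewrite ?H, ?H' in *
  | destruct (run_out a b f k ltac:(lia)) as [H H']; rewrite ?H, ?H' in * ]; try (exfalso; lia).

Ltac solve_ramp :=
  match goal with
  | Hramp : forall k, (?a < k <= ?b)%nat -> _ , t : nat |- _ =>
      first [ destruct (Hramp t ltac:(lia)); lra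
            | let E := fresh in assert (E : t = a) by lia; rewrite E in *;
              match goal with Hfa : (2 <= a)%nat -> _ |- _ => specialize (Hfa ltac:(lia)) end; lra
            | let E := fresh in assert (E : (t - 1)%nat = b) by lia; rewrite E in *;
              match goal with Hfb : (b < _)%nat -> _ |- _ => specialize (Hfb ltac:(lia)) end; lra
            | match goal with Hf : forall k, (a <= k <= b)%nat -> _ |- _ =>
                first [ destruct (Hf t ltac:(lia)); lra | destruct (Hf (t-1)%nat ltac:(lia)); lra ] end ]
  end.

Lemma runpt_inP T L l Cb Cu V Vb a b f :
  Cu > 0 -> V > 0 -> Cu < Vb -> Cu <= Cb ->
  (1 <= a)%nat -> (a <= b)%nat -> (b <= T)%nat ->
  ((2 <= a)%nat -> b = T \/ (a + L <= b + 1)%nat) ->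
  (forall k, (a <= k <= b)%nat -> Cu <= f k <= Cb) ->
  ((2 <= a)%nat -> f a <= Vb) ->
  ((b < T)%nat -> f b <= Vb) ->
  (forall k, (a < k <= b)%nat -> f k - f (k-1)%nat <= V /\ f (k-1)%nat - f k <= V) ->
  inP T L l Cb Cu V Vb (runpt a b f).
Proof.
  intros HCu HV HCuVb HCuCb Ha Hab Hb Hup Hf Hfa Hfb Hramp.
  unfold inP; cbv zeta. split; [|split; [|split; [|split; [|split; [|split]]]]].
  - intros k Hk. apply run_out. lia.
  - intros k Hk. runcase a b f k; try (split; [lra|auto]).
    split; [|auto]. destruct (Hf k ltac:(lia)); lra.
  - intros t k Ht Hk. runcase a b f t; runcase a b f (t-1)%nat; runcase a b f k; try lra;
      exfalso; destruct (Hup ltac:(lia)) as [E|E]; lia.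
  - intros t k Ht Hk. runcase a b f t; runcase a b f (t-1)%nat; runcase a b f k; try lra.
  - intros t Ht. runcase a b f t; try lra. destruct (Hf t ltac:(lia)); lra.
  - intros t Ht. runcase a b f t; runcase a b f (t-1)%nat; try lra; solve_ramp.
  - intros t Ht. runcase a b f t; runcase a b f (t-1)%nat; try lra; solve_ramp.
Qed.

Lemma zpt_inP T L l Cb Cu V Vb : Cb > 0 -> Vb > 0 -> V > 0 -> inP T L l Cb Cu V Vb zpt.
Proof.
  intros H1 H2 H3. unfold inP, zpt; simpl.
  split; [|split; [|split; [|split; [|split; [|split]]]]]; intros; lra.
Qed.

Lemma LinF_fst k : LinF (fun z => fst z k).
Proof. intros n lam p H. exact (proj1 (H k)). Qed.
Lemma LinF_snd k : LinF (fun z => snd z k).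
Proof. intros n lam p H. exact (proj2 (H k)). Qed.
Lemma LinF_sub f g : LinF f -> LinF g -> LinF (fun z => f z - g z).
Proof.
  intros Hf Hg n lam p H.
  rewrite (sum_eq _ (fun i => lam i * f (p i) - lam i * g (p i))) by (intros; ring).
  rewrite minus_sum, (Hf n lam p H), (Hg n lam p H). ring.
Qed.
Lemma LinF_scal c f : LinF f -> LinF (fun z => c * f z).
Proof.
  intros Hf n lam p H.
  rewrite (sum_eq _ (fun i => lam i * f (p i) * c)) by (intros; ring).
  rewrite <- scal_sum, (Hf n lam p H). ring.
Qed.
Lemma LinF_LinY r : LinY r -> LinF r.
Proof. intros Hr n lam p H. apply LinY_zero; auto. intros k; exact (proj2 (H k)). Qed.

Lemma r_snd r z1 z2 : LinY r -> (forall k, snd z1 k = snd z2 k) -> r z1 = r z2.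
Proof.
  intros Hr H. rewrite (Hr 0%nat (fun _ => 1) (fun _ => z2) z1). simpl; ring.
  intros k; simpl. rewrite H; ring.
Qed.

Lemma r_zero r : LinY r -> r zpt = 0.
Proof.
  intros Hr. rewrite (Hr 0%nat (fun _ => 0) (fun _ => zpt) zpt). simpl; ring.
  intros; simpl; ring.
Qed.

Section Fam.
Variables (T L l : nat) (Cb Cu V Vb : R) (t : nat) (r : point -> R)
  (Q : nat -> point) (u w : nat -> nat).

Definition Cpt (j : nat) : point := runpt 1 T (fun k => if Nat.eqb k j then Cb - V else Cb).

Definition pfam (i : nat) : point :=
  if Nat.eqb i 0 then zpt else if Nat.eqb i 1 then runpt 1 T (fun _ => Cb)
  else if Nat.leb i T then Cpt (sig t (i-1)) else if Nat.ltb i (2*T) then Q (i - T)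
  else runpt 1 T (fun _ => Cu).

Definition ffam (j : nat) (z : point) : R :=
  if Nat.eqb j 1 then snd z 1%nat
  else if Nat.leb j T then fst z (sig t (j-1)) - Cb * snd z (sig t (j-1))
  else if Nat.ltb j (2*T) then snd z (u (j-T)) - snd z (w (j-T))
  else r z - fst z t.

Hypothesis HT : (2 <= T)%nat.
Hypothesis Ht : (1 <= t <= T)%nat.

Lemma pf0 : pfam 0 = zpt.
Proof. reflexivity. Qed.
Lemma pf1 : pfam 1 = runpt 1 T (fun _ => Cb).
Proof. reflexivity. Qed.
Lemma pfC i : (2 <= i <= T)%nat -> pfam i = Cpt (sig t (i-1)).
Proof.
  intros H. unfold pfam. rewrite (proj2 (Nat.eqb_neq i 0)) by lia.
  rewrite (proj2 (Nat.eqb_neq i 1)) by lia. rewrite (proj2 (Nat.leb_le i T)) by lia. reflexivity.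
Qed.
Lemma pfQ i : (T < i < 2 * T)%nat -> pfam i = Q (i - T).
Proof.
  intros H. unfold pfam. rewrite (proj2 (Nat.eqb_neq i 0)) by lia.
  rewrite (proj2 (Nat.eqb_neq i 1)) by lia. rewrite (proj2 (Nat.leb_nle i T)) by lia.
  rewrite (proj2 (Nat.ltb_lt i (2*T))) by lia. reflexivity.
Qed.
Lemma pfI : pfam (2 * T) = runpt 1 T (fun _ => Cu).
Proof.
  unfold pfam. rewrite (proj2 (Nat.eqb_neq (2*T) 0)) by lia.
  rewrite (proj2 (Nat.eqb_neq (2*T) 1)) by lia. rewrite (proj2 (Nat.leb_nle (2*T) T)) by lia.
  rewrite (proj2 (Nat.ltb_nlt (2*T) (2*T))) by lia. reflexivity.
Qed.

Lemma ff1 z : ffam 1 z = snd z 1%nat.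
Proof. reflexivity. Qed.
Lemma ffC j z : (2 <= j <= T)%nat -> ffam j z = fst z (sig t (j-1)) - Cb * snd z (sig t (j-1)).
Proof.
  intros H. unfold ffam. rewrite (proj2 (Nat.eqb_neq j 1)) by lia.
  rewrite (proj2 (Nat.leb_le j T)) by lia. reflexivity.
Qed.
Lemma ffQ j z : (T < j < 2 * T)%nat -> ffam j z = snd z (u (j-T)) - snd z (w (j-T)).
Proof.
  intros H. unfold ffam. rewrite (proj2 (Nat.eqb_neq j 1)) by lia.
  rewrite (proj2 (Nat.leb_nle j T)) by lia. rewrite (proj2 (Nat.ltb_lt j (2*T))) by lia. reflexivity.
Qed.
Lemma ffI z : ffam (2 * T) z = r z - fst z t.
Proof.
  unfold ffam. rewrite (proj2 (Nat.eqb_neq (2*T) 1)) by lia.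
  rewrite (proj2 (Nat.leb_nle (2*T) T)) by lia. rewrite (proj2 (Nat.ltb_nlt (2*T) (2*T))) by lia.
  reflexivity.
Qed.

Lemma sig_range j : (1 <= j <= T - 1)%nat -> (1 <= sig t j <= T)%nat /\ sig t j <> t.
Proof. intros H. unfold sig. destruct (Nat.ltb_spec j t); lia. Qed.
Lemma sig_inj j1 j2 : sig t j1 = sig t j2 -> j1 = j2.
Proof. unfold sig. destruct (Nat.ltb_spec j1 t); destruct (Nat.ltb_spec j2 t); lia. Qed.

Hypotheses (HCu : Cu > 0) (HV : V > 0) (HCuVb : Cu < Vb) (HVbV : Vb + V <= Cb) (HVbCuV : Vb < Cu + V).
Hypothesis Hr : LinY r.
Hypothesis HrC : r (runpt 1 T (fun _ => Cb)) = Cb.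
Hypothesis HQ : forall m, (1 <= m <= T-1)%nat -> inP T L l Cb Cu V Vb (Q m) /\ fst (Q m) t = r (Q m).
Hypothesis Huw : forall m, (1 <= m <= T-1)%nat -> (1 <= u m <= T)%nat /\ (1 <= w m <= T)%nat.
Hypothesis Hlow : forall m m', (1 <= m')%nat -> (m' < m)%nat -> (m <= T-1)%nat ->
  snd (Q m') (u m) - snd (Q m') (w m) = 0.
Hypothesis Hdiag : forall m, (1 <= m <= T-1)%nat -> snd (Q m) (u m) - snd (Q m) (w m) <> 0.

Lemma pfam_inP i : (i <= 2 * T)%nat -> inP T L l Cb Cu V Vb (pfam i).
Proof.
  intros Hi.
  destruct (Nat.eq_dec i 0) as [->|H0]; [apply zpt_inP; lra|].
  destruct (Nat.eq_dec i 1) as [->|H1].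
  { rewrite pf1. apply runpt_inP; try lra; try lia; intros; try lra. }
  destruct (le_lt_dec i T).
  { rewrite pfC by lia. unfold Cpt. apply runpt_inP; try lra; try lia; intros;
    repeat match goal with |- context [Nat.eqb ?a ?b] => destruct (Nat.eqb a b) end; lra. }
  destruct (Nat.eq_dec i (2*T)) as [->|HI].
  { rewrite pfI. apply runpt_inP; try lra; try lia; intros; try lra. }
  rewrite pfQ by lia. apply HQ. lia.
Qed.

Lemma pfam_face i : (i <= 2 * T - 1)%nat -> fst (pfam i) t = r (pfam i).
Proof.
  intros Hi.
  destruct (Nat.eq_dec i 0) as [->|H0]; [rewrite pf0, r_zero by auto; reflexivity|].
  destruct (Nat.eq_dec i 1) as [->|H1].
  { rewrite pf1, HrC. apply (run_in 1 T (fun _ => Cb) t). lia. }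
  destruct (le_lt_dec i T).
  { rewrite pfC by lia. unfold Cpt. destruct (sig_range (i-1) ltac:(lia)) as [R1 R2].
    rewrite (r_snd r _ (runpt 1 T (fun _ => Cb))) by (auto; intros; reflexivity).
    rewrite HrC. rewrite (proj1 (run_in 1 T _ t ltac:(lia))).
    rewrite (proj2 (Nat.eqb_neq t _)) by auto. reflexivity. }
  rewrite pfQ by lia. apply HQ. lia.
Qed.

Lemma ff_lin j : (1 <= j <= 2 * T)%nat -> LinF (ffam j).
Proof.
  intros Hj.
  destruct (Nat.eq_dec j 1) as [->|H1]; [apply LinF_snd|].
  destruct (le_lt_dec j T).
  { intros n lam p H. rewrite (sum_eq _ (fun i => lam i * (fst (p i) (sig t (j-1)) - Cb * snd (p i) (sig t (j-1))))).
    2:{ intros; rewrite ffC by lia; reflexivity. }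
    apply (LinF_sub _ _ (LinF_fst _) (LinF_scal _ _ (LinF_snd _))); auto. }
  destruct (Nat.eq_dec j (2*T)) as [->|HI].
  { intros n lam p H. rewrite (sum_eq _ (fun i => lam i * (r (p i) - fst (p i) t))).
    2:{ intros; rewrite ffI; reflexivity. }
    apply (LinF_sub _ _ (LinF_LinY _ Hr) (LinF_fst _)); auto. }
  intros n lam p H. rewrite (sum_eq _ (fun i => lam i * (snd (p i) (u (j-T)) - snd (p i) (w (j-T))))).
  2:{ intros; rewrite ffQ by lia; reflexivity. }
  apply (LinF_sub _ _ (LinF_snd _) (LinF_snd _)); auto.
Qed.

Lemma ff_zero j : (1 <= j <= 2 * T)%nat -> ffam j (pfam 0) = 0.
Proof.
  intros Hj. rewrite pf0.
  destruct (Nat.eq_dec j 1) as [->|H1]; [reflexivity|].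
  destruct (le_lt_dec j T). { rewrite ffC by lia. simpl; ring. }
  destruct (Nat.eq_dec j (2*T)) as [->|HI]. { rewrite ffI, r_zero by auto. simpl; ring. }
  rewrite ffQ by lia. simpl; ring.
Qed.

Lemma ff_low i j : (1 <= i)%nat -> (i < j)%nat -> (j <= 2 * T)%nat -> ffam j (pfam i) = 0.
Proof.
  intros Hi Hij Hj.
  destruct (le_lt_dec j T).
  { rewrite ffC by lia. destruct (sig_range (j-1) ltac:(lia)) as [R1 R2].
    destruct (Nat.eq_dec i 1) as [->|H1].
    - rewrite pf1. destruct (run_in 1 T (fun _ => Cb) (sig t (j-1)) ltac:(lia)) as [E1 E2].
      rewrite E1, E2. ring.
    - rewrite pfC by lia. unfold Cpt.
      destruct (run_in 1 T (fun k => if Nat.eqb k (sig t (i-1)) then Cb - V else Cb) (sig t (j-1)) ltac:(lia)) as [E1 E2].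
      rewrite E1, E2. destruct (Nat.eqb_spec (sig t (j-1)) (sig t (i-1))) as [E|E].
      + apply sig_inj in E. lia.
      + ring. }
  destruct (Nat.eq_dec j (2*T)) as [->|HI].
  { rewrite ffI, pfam_face by lia. ring. }
  rewrite ffQ by lia. destruct (Huw (j - T) ltac:(lia)) as [[U1 U2] [W1 W2]].
  destruct (le_lt_dec i T).
  { assert (Hs : forall k, (1 <= k <= T)%nat -> snd (pfam i) k = 1).
    { intros k Hk. destruct (Nat.eq_dec i 1) as [->|H1].
      - rewrite pf1. apply (run_in 1 T _ k Hk).
      - rewrite pfC by lia. apply (run_in 1 T _ k Hk). }
    rewrite !Hs by lia. ring. }
  rewrite pfQ by lia. apply Hlow; lia.
Qed.

Lemma ff_diag j : (1 <= j <= 2 * T)%nat -> ffam j (pfam j) <> 0.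
Proof.
  intros Hj.
  destruct (Nat.eq_dec j 1) as [->|H1].
  { rewrite ff1, pf1. rewrite (proj2 (run_in 1 T _ 1 ltac:(lia))). lra. }
  destruct (le_lt_dec j T).
  { rewrite ffC, pfC by lia. destruct (sig_range (j-1) ltac:(lia)) as [R1 R2]. unfold Cpt.
    destruct (run_in 1 T (fun k => if Nat.eqb k (sig t (j-1)) then Cb - V else Cb) (sig t (j-1)) ltac:(lia)) as [E1 E2].
    rewrite E1, E2, Nat.eqb_refl. lra. }
  destruct (Nat.eq_dec j (2*T)) as [->|HI].
  { rewrite ffI, pfI. rewrite (r_snd r _ (runpt 1 T (fun _ => Cb))) by (auto; intros; reflexivity).
    rewrite HrC. rewrite (proj1 (run_in 1 T _ t ltac:(lia))). lra. }
  rewrite ffQ, pfQ by lia. apply Hdiag. lia.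
Qed.

Lemma fam_indep n : (n <= 2 * T)%nat -> aff_indep pfam n.
Proof.
  intros Hn. apply (tri pfam n ffam).
  - intros; apply ff_lin; lia.
  - intros; apply ff_zero; lia.
  - intros; apply ff_low; lia.
  - intros; apply ff_diag; lia.
Qed.

Hypothesis Hvalid : valid (conv (inP T L l Cb Cu V Vb)) (fun z => fst z t) r.

Lemma facet_gen : facet_defining (conv (inP T L l Cb Cu V Vb)) (fun z => fst z t) r.
Proof.
  split; [exact Hvalid|]. exists (2 * T - 1)%nat. split.
  - split.
    + exists pfam. split.
      * intros i Hi. apply inP_conv, pfam_inP. lia.
      * replace (S (2 * T - 1)) with (2 * T)%nat by lia. apply fam_indep. lia.
    + intros p Hp. apply (U1 T (conv (inP T L l Cb Cu V Vb)) p); [lia| |exact Hp].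
      intros z Hz. apply (conv_vanish T (inP T L l Cb Cu V Vb)); auto.
      intros w0 Hw0. apply (inP_vanish T L l Cb Cu V Vb); auto.
  - split.
    + exists pfam. split.
      * intros i Hi. split; [apply inP_conv, pfam_inP; lia|]. apply pfam_face. lia.
      * apply fam_indep. lia.
    + intros p Hp. apply (U2 T t r (fun z => conv (inP T L l Cb Cu V Vb) z /\ fst z t = r z) p); [lia|exact Hr|lia| |exact Hp].
      intros z [Hz Heq]. split; [|exact Heq].
      apply (conv_vanish T (inP T L l Cb Cu V Vb)); auto.
      intros w0 Hw0. apply (inP_vanish T L l Cb Cu V Vb); auto.
Qed.

End Fam.

Lemma valid_back_P T L l Cb Cu V Vb Sl eta t z :
  V > 0 -> Vb > 0 -> NoDup Sl ->
  (forall s, In s Sl -> (1 <= s <= L)%nat /\ (s + 2 <= t)%nat /\ INR s * V <= Cb - Vb) ->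
  0 <= eta -> eta <= INR L -> eta * V <= Cb - Vb -> (2 <= t <= T)%nat ->
  inP T L l Cb Cu V Vb z -> fst z t <= rhs_back Cb V Vb eta Sl t z.
Proof.
  intros HV HVb Hnd HS He0 HeL HeC Ht HP.
  destruct HP as [H0 [Hb [Hi [Hii [Hiii [Hiv Hv]]]]]].
  set (y := snd z) in *. set (x := fst z) in *.
  assert (yv : forall k, (1 <= k <= T)%nat -> y k = 0 \/ y k = 1) by (intros; apply Hb; auto).
  assert (xnn : forall k, (1 <= k <= T)%nat -> 0 <= x k) by (intros; apply Hb; auto).
  assert (xb : forall k, (1 <= k <= T)%nat -> x k <= Cb * y k) by (intros k Hk; destruct (Hiii k Hk); lra).
  set (st := fun s => y (t - s)%nat = 1 /\ y (t - s - 1)%nat = 0).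
  assert (F1 : forall s, In s Sl -> st s -> forall k, (t - s <= k <= t - s + L - 1)%nat -> (k <= T)%nat -> y k = 1).
  { intros s Hs [E1 E2] k Hk HkT. destruct (HS s Hs) as [[Hs1 Hs2] [Hs3 Hs4]].
    assert (Hc := Hi (t - s)%nat k ltac:(lia) ltac:(lia)). rewrite E1, E2 in Hc.
    destruct (yv k ltac:(lia)); lra. }
  assert (Uq : forall s1 s2, In s1 Sl -> In s2 Sl -> st s1 -> st s2 -> s1 = s2).
  { intros s1 s2 H1 H2 S1 S2.
    destruct (HS s1 H1) as [[? ?] [? ?]]. destruct (HS s2 H2) as [[? ?] [? ?]].
    destruct (lt_eq_lt_dec s1 s2) as [[Hlt|Heq]|Hgt]; auto.
    - assert (E := F1 s2 H2 S2 (t - s1 - 1)%nat ltac:(lia) ltac:(lia)). destruct S1 as [_ S1]. lra.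
    - assert (E := F1 s1 H1 S1 (t - s2 - 1)%nat ltac:(lia) ltac:(lia)). destruct S2 as [_ S2]. lra. }
  set (c := fun s => Cb - Vb - INR s * V).
  assert (Hc0 : forall s, In s Sl -> 0 <= c s) by (intros s Hs; destruct (HS s Hs) as [_ [_ ?]]; unfold c; lra).
  assert (Tnp : forall s, In s Sl -> ~ st s -> c s * (y (t - s)%nat - y (t - s - 1)%nat) <= 0).
  { intros s Hs Hn. destruct (HS s Hs) as [[? ?] [? ?]].
    assert (D : y (t - s)%nat - y (t - s - 1)%nat <= 0).
    { destruct (yv (t - s)%nat ltac:(lia)) as [A|A]; destruct (yv (t - s - 1)%nat ltac:(lia)) as [B|B];
        rewrite A, B; try lra. exfalso; apply Hn; split; auto. }
    assert (0 <= c s) by auto. nra. }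
  unfold rhs_back. fold y. fold c.
  set (LS := lsum Sl (fun s => c s * (y (t - s)%nat - y (t - s - 1)%nat))).
  change (lsum Sl (fun s => (Cb - Vb - INR s * V) * (y (t - s)%nat - y (t - s - 1)%nat))) with LS.
  destruct (classic (exists s0, In s0 Sl /\ st s0)) as [[s0 [Hs0 Hst]]|Hno].
  - assert (HLS : LS <= c s0).
    { unfold LS. rewrite <- (lsum_ind Sl s0 (c s0)) by auto. apply lsum_le. intros s Hs.
      destruct (Nat.eqb_spec s s0) as [->|Hne].
      - destruct Hst as [A B]. rewrite A, B. lra.
      - apply Tnp; auto. }
    destruct (HS s0 Hs0) as [[Hs1 Hs2] [Hs3 Hs4]].
    assert (Hy1 : y (t - 1)%nat = 1) by (apply (F1 s0 Hs0 Hst); lia).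
    destruct (yv t ltac:(lia)) as [Yt|Yt].
    +
      assert (s0 = L).
      { destruct (Nat.eq_dec s0 L); auto. assert (E := F1 s0 Hs0 Hst t ltac:(lia) ltac:(lia)). lra. }
      subst s0. assert (x t = 0) by (assert (A := xb t ltac:(lia)); assert (B := xnn t ltac:(lia)); rewrite Yt in A; lra).
      rewrite Yt, Hy1. unfold c in HLS. assert (eta * V <= INR L * V) by (apply Rmult_le_compat_r; lra). lra.
    +
      set (a := (t - s0)%nat).
      destruct Hst as [Ya Ya1].
      assert (Hx1 : x (a - 1)%nat <= 0).
      { assert (A := xb (a - 1)%nat ltac:(unfold a; lia)). unfold a in *. rewrite Ya1 in A. lra. }
      assert (Ch : forall j, (a + j <= t)%nat -> x (a + j)%nat <= Vb + INR j * V).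
      { induction j as [|j IH]; intros Hj.
        - rewrite Nat.add_0_r. assert (A := Hiv a ltac:(unfold a; lia)). unfold a in *.
          rewrite Ya1 in A. simpl. lra.
        - assert (A := Hiv (a + S j)%nat ltac:(unfold a in *; lia)).
          replace (a + S j - 1)%nat with (a + j)%nat in A by lia.
          assert (Yaj : y (a + j)%nat = 1).
          { destruct (Nat.eq_dec j 0) as [->|Hj0].
            - rewrite Nat.add_0_r. exact Ya.
            - apply (F1 s0 Hs0 (conj Ya Ya1)); unfold a in *; lia. }
          rewrite Yaj in A. rewrite S_INR. specialize (IH ltac:(lia)). lra. }
      assert (Hxt := Ch s0 ltac:(unfold a; lia)). replace (a + s0)%nat with t in Hxt by (unfold a; lia).
      rewrite Yt, Hy1. unfold c in HLS. lra.
  - assert (HLS : LS <= 0).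
    { unfold LS. rewrite <- (lsum_zero Sl). apply lsum_le. intros s Hs. apply Tnp; auto.
      intros Hst. apply Hno. exists s; auto. }
    assert (HeV : 0 <= eta * V) by nra.
    destruct (yv t ltac:(lia)) as [Yt|Yt].
    + assert (x t = 0) by (assert (A := xb t ltac:(lia)); assert (B := xnn t ltac:(lia)); rewrite Yt in A; lra).
      destruct (yv (t-1)%nat ltac:(lia)) as [Y1|Y1]; rewrite Yt, Y1; lra.
    + destruct (yv (t-1)%nat ltac:(lia)) as [Y1|Y1].
      * assert (A := Hiv t ltac:(lia)). rewrite Y1 in A.
        assert (B := xb (t-1)%nat ltac:(lia)). rewrite Y1 in B. rewrite Yt, Y1. lra.
      * assert (A := xb t ltac:(lia)). rewrite Yt, Y1. rewrite Yt in A. lra.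
Qed.

Lemma run_jump a b f k : (1 <= a <= b)%nat -> (2 <= k)%nat ->
  snd (runpt a b f) k - snd (runpt a b f) (k-1)%nat =
  (if Nat.eqb k a then 1 else 0) - (if Nat.eqb k (S b) then 1 else 0).
Proof.
  intros Hab Hk. unfold runpt; simpl.
  destruct (Nat.leb_spec a k); destruct (Nat.leb_spec k b);
  destruct (Nat.leb_spec a (k-1)); destruct (Nat.leb_spec (k-1) b);
  destruct (Nat.eqb_spec k a); destruct (Nat.eqb_spec k (S b)); simpl; try lra; lia.
Qed.

Lemma run_jump0 a b f k : (1 <= a <= b)%nat -> (2 <= k)%nat -> k <> a -> k <> S b ->
  snd (runpt a b f) k - snd (runpt a b f) (k-1)%nat = 0.
Proof.
  intros H1 H2 H3 H4. rewrite run_jump by auto.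
  rewrite (proj2 (Nat.eqb_neq k a)), (proj2 (Nat.eqb_neq k (S b))) by auto. ring.
Qed.

Lemma INR_min_step k t : (1 <= k)%nat ->
  0 <= INR (Nat.min k t) - INR (Nat.min (k-1) t) <= 1.
Proof.
  intros Hk. destruct (le_lt_dec k t).
  - rewrite Nat.min_l by lia. rewrite Nat.min_l by lia.
    destruct k as [|k]; [lia|]. replace (S k - 1)%nat with k by lia. rewrite S_INR. lra.
  - rewrite Nat.min_r by lia. rewrite Nat.min_r by lia. lra.
Qed.

Section Back.
Variables (T L l : nat) (Cb Cu V Vb eta : R) (Sl : list nat) (t : nat).
Hypotheses (HCu : Cu > 0) (HV : V > 0) (HCuVb : Cu < Vb) (HVbV : Vb + V <= Cb) (HVbCuV : Vb < Cu + V).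
Hypothesis Hnd : NoDup Sl.
Hypothesis HS : forall s, In s Sl -> (1 <= s <= L)%nat /\ (s + 2 <= t)%nat /\ INR s * V <= Cb - Vb.
Hypothesis Ht : (2 <= t <= T)%nat.

Let r := rhs_back Cb V Vb eta Sl t.

Lemma rb_eval (z : point) (g : nat -> R) :
  (forall s, In s Sl -> snd z (t - s)%nat - snd z (t - s - 1)%nat = g s) ->
  r z = (Vb + eta * V) * snd z t + (Cb - Vb - eta * V) * snd z (t - 1)%nat
        - lsum Sl (fun s => (Cb - Vb - INR s * V) * g s).
Proof.
  intros H. unfold r, rhs_back. f_equal. apply lsum_ext. intros s Hs. rewrite H; auto.
Qed.

Lemma rb_allon : r (runpt 1 T (fun _ => Cb)) = Cb.
Proof.
  rewrite (rb_eval _ (fun _ => 0)).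
  - rewrite (lsum_ext _ _ (fun _ => 0)) by (intros; ring). rewrite lsum_zero.
    rewrite (proj2 (run_in 1 T _ t ltac:(lia))), (proj2 (run_in 1 T _ (t-1) ltac:(lia))). ring.
  - intros s Hs. destruct (HS s Hs) as [? [? ?]].
    replace (t - s - 1)%nat with ((t - s) - 1)%nat by lia. apply run_jump0; lia.
Qed.

Variable Qt : point.
Hypotheses (QtP : inP T L l Cb Cu V Vb Qt) (QtF : fst Qt t = r Qt)
  (QtJ0 : forall k, (t < k <= T)%nat -> snd Qt k - snd Qt (k-1)%nat = 0)
  (QtJ1 : snd Qt t - snd Qt (t-1)%nat <> 0).

Definition slope (a : nat) : nat -> R := fun k => Vb + (INR (Nat.min k t) - INR a) * V.

Definition Qb (a : nat) : point :=
  if Nat.ltb t a then runpt a T (fun _ => Cu)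
  else if Nat.eqb a t then Qt
  else if in_dec Nat.eq_dec (t - a)%nat Sl then runpt a T (slope a)
  else runpt 1 (a-1) (fun _ => Cu).

Lemma Qb_prop a : (2 <= a <= T)%nat ->
  inP T L l Cb Cu V Vb (Qb a) /\ fst (Qb a) t = r (Qb a) /\
  (forall k, (a < k <= T)%nat -> snd (Qb a) k - snd (Qb a) (k-1)%nat = 0) /\
  snd (Qb a) a - snd (Qb a) (a-1)%nat <> 0.
Proof.
  intros Ha. unfold Qb.
  destruct (Nat.ltb_spec t a) as [Hta|Hta].
  { split; [|split; [|split]].
    - apply runpt_inP; try lra; try lia; intros; lra.
    - rewrite (proj1 (run_out a T _ t ltac:(lia))).
      rewrite (rb_eval _ (fun _ => 0)).
      + rewrite (lsum_ext _ _ (fun _ => 0)) by (intros; ring). rewrite lsum_zero.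
        rewrite (proj2 (run_out a T _ t ltac:(lia))), (proj2 (run_out a T _ (t-1) ltac:(lia))). ring.
      + intros s Hs. destruct (HS s Hs) as [? [? ?]].
        replace (t - s - 1)%nat with ((t - s) - 1)%nat by lia. apply run_jump0; lia.
    - intros k Hk. apply run_jump0; lia.
    - rewrite run_jump by lia. rewrite Nat.eqb_refl, (proj2 (Nat.eqb_neq a (S T))) by lia. lra. }
  destruct (Nat.eqb_spec a t) as [->|Hat].
  { split; [|split; [|split]]; auto. }
  destruct (in_dec Nat.eq_dec (t - a)%nat Sl) as [Hin|Hnin].
  { destruct (HS _ Hin) as [? [? Hc]]. rewrite minus_INR in Hc by lia.
    split; [|split; [|split]].
    - apply runpt_inP; try lra; try lia.
      + intros k Hk. unfold slope.
        assert (INR a <= INR (Nat.min k t)) by (apply le_INR; lia).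
        assert (INR (Nat.min k t) <= INR t) by (apply le_INR; lia).
        split; nra.
      + intros _. unfold slope. rewrite Nat.min_l by lia. lra.
      + intros k Hk. unfold slope. destruct (INR_min_step k t ltac:(lia)). split; nra.
    - rewrite (proj1 (run_in a T _ t ltac:(lia))).
      rewrite (rb_eval _ (fun s => if Nat.eqb s (t - a) then 1 else 0)).
      + rewrite (lsum_ext _ _ (fun s => if Nat.eqb s (t - a) then Cb - Vb - INR (t - a) * V else 0)).
        * rewrite lsum_ind by auto.
          rewrite (proj2 (run_in a T _ t ltac:(lia))), (proj2 (run_in a T _ (t-1) ltac:(lia))).
          unfold slope. rewrite Nat.min_id, minus_INR by lia. ring.
        * intros s Hs. destruct (Nat.eqb_spec s (t-a)) as [->|]; ring.
      + intros s Hs. destruct (HS s Hs) as [? [? ?]].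
        replace (t - s - 1)%nat with ((t - s) - 1)%nat by lia. rewrite run_jump by lia.
        rewrite (proj2 (Nat.eqb_neq (t - s) (S T))) by lia.
        destruct (Nat.eqb_spec (t - s) a); destruct (Nat.eqb_spec s (t - a)); try lia; ring.
    - intros k Hk. apply run_jump0; lia.
    - rewrite run_jump by lia. rewrite Nat.eqb_refl, (proj2 (Nat.eqb_neq a (S T))) by lia. lra. }
  split; [|split; [|split]].
  - apply runpt_inP; try lra; try lia; intros; lra.
  - rewrite (proj1 (run_out 1 (a-1) _ t ltac:(lia))).
    rewrite (rb_eval _ (fun _ => 0)).
    + rewrite (lsum_ext _ _ (fun _ => 0)) by (intros; ring). rewrite lsum_zero.
      rewrite (proj2 (run_out 1 (a-1) _ t ltac:(lia))), (proj2 (run_out 1 (a-1) _ (t-1) ltac:(lia))). ring.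
    + intros s Hs. destruct (HS s Hs) as [? [? ?]].
      replace (t - s - 1)%nat with ((t - s) - 1)%nat by lia. apply run_jump0; try lia.
      intros E. apply Hnin. replace (t - a)%nat with s by lia. exact Hs.
  - intros k Hk. apply run_jump0; lia.
  - rewrite run_jump by lia. rewrite (proj2 (Nat.eqb_neq a 1)) by lia.
    replace (S (a - 1)) with a by lia. rewrite Nat.eqb_refl. lra.
Qed.

Hypothesis Hvalid : valid (conv (inP T L l Cb Cu V Vb)) (fun z => fst z t) r.

Lemma back_facet : facet_defining (conv (inP T L l Cb Cu V Vb)) (fun z => fst z t) r.
Proof.
  apply (facet_gen T L l Cb Cu V Vb t r (fun m => Qb (S m)) (fun m => S m) (fun m => m));
    try lia; try lra; auto.
  - apply LinY_back.
  - apply rb_allon.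
  - intros m Hm. destruct (Qb_prop (S m) ltac:(lia)) as [A [B _]]. auto.
  - intros m m' H1 H2 H3. destruct (Qb_prop (S m') ltac:(lia)) as [_ [_ [C _]]].
    replace m with (S m - 1)%nat at 2 by lia. apply C. lia.
  - intros m Hm. destruct (Qb_prop (S m) ltac:(lia)) as [_ [_ [_ D]]].
    replace (S m - 1)%nat with m in D by lia. exact D.
Qed.

End Back.

Lemma back_main T L l Cb Cu V Vb Sl eta t :
  Cu > 0 -> V > 0 -> Cu < Vb -> Vb + V <= Cb -> Vb < Cu + V -> NoDup Sl ->
  (forall s, In s Sl -> (1 <= s <= L)%nat /\ (s + 2 <= t)%nat /\ INR s * V <= Cb - Vb) ->
  0 <= eta -> eta <= INR L -> eta * V <= Cb - Vb -> (2 <= t <= T)%nat ->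
  valid (conv (inP T L l Cb Cu V Vb)) (fun z => fst z t) (rhs_back Cb V Vb eta Sl t) /\
  ((eta = 0 \/ eta = (Cb - Vb) / V \/ (eta = INR L /\ In L Sl)) ->
   facet_defining (conv (inP T L l Cb Cu V Vb)) (fun z => fst z t) (rhs_back Cb V Vb eta Sl t)).
Proof.
  intros HCu HV HCuVb HVbV HVbCuV Hnd HS He0 HeL HeC Ht.
  assert (Hval : valid (conv (inP T L l Cb Cu V Vb)) (fun z => fst z t) (rhs_back Cb V Vb eta Sl t)).
  { apply valid_conv; [apply LinY_back|]. intros z Hz.
    apply (valid_back_P T L l Cb Cu V Vb Sl eta t z); auto; lra. }
  split; [exact Hval|]. intros [E|[E|[E HL]]].
  -
    apply (back_facet T L l Cb Cu V Vb eta Sl t HCu HV HCuVb HVbV HVbCuV Hnd HS Ht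
             (runpt t T (fun _ => Vb))); auto.
    + apply runpt_inP; try lra; try lia; intros; lra.
    + rewrite (proj1 (run_in t T _ t ltac:(lia))).
      rewrite (rb_eval _ _ _ _ _ _ _ (fun _ => 0)).
      * rewrite (lsum_ext _ _ (fun _ => 0)) by (intros; ring). rewrite lsum_zero.
        rewrite (proj2 (run_in t T _ t ltac:(lia))), (proj2 (run_out t T _ (t-1) ltac:(lia))).
        subst eta. ring.
      * intros s Hs. destruct (HS s Hs) as [? [? ?]].
        replace (t - s - 1)%nat with ((t - s) - 1)%nat by lia. apply run_jump0; lia.
    + intros k Hk. apply run_jump0; lia.
    + rewrite run_jump by lia. rewrite Nat.eqb_refl, (proj2 (Nat.eqb_neq t (S T))) by lia. lra.
  -
    assert (EV : eta * V = Cb - Vb) by (subst eta; field; lra).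
    apply (back_facet T L l Cb Cu V Vb eta Sl t HCu HV HCuVb HVbV HVbCuV Hnd HS Ht
             (runpt 1 (t-1) (fun _ => Cu))); auto.
    + apply runpt_inP; try lra; try lia; intros; lra.
    + rewrite (proj1 (run_out 1 (t-1) _ t ltac:(lia))).
      rewrite (rb_eval _ _ _ _ _ _ _ (fun _ => 0)).
      * rewrite (lsum_ext _ _ (fun _ => 0)) by (intros; ring). rewrite lsum_zero.
        rewrite (proj2 (run_out 1 (t-1) _ t ltac:(lia))), (proj2 (run_in 1 (t-1) _ (t-1) ltac:(lia))).
        rewrite EV. ring.
      * intros s Hs. destruct (HS s Hs) as [? [? ?]].
        replace (t - s - 1)%nat with ((t - s) - 1)%nat by lia. apply run_jump0; lia.
    + intros k Hk. apply run_jump0; lia.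
    + rewrite run_jump by lia. rewrite (proj2 (Nat.eqb_neq t 1)) by lia.
      replace (S (t-1)) with t by lia. rewrite Nat.eqb_refl. lra.
  -
    destruct (HS L HL) as [HL1 [HL2 HL3]].
    apply (back_facet T L l Cb Cu V Vb eta Sl t HCu HV HCuVb HVbV HVbCuV Hnd HS Ht
             (runpt (t-L) (t-1) (fun _ => Cu))); auto.
    + apply runpt_inP; try lra; try lia; intros; lra.
    + rewrite (proj1 (run_out (t-L) (t-1) _ t ltac:(lia))).
      rewrite (rb_eval _ _ _ _ _ _ _ (fun s => if Nat.eqb s L then 1 else 0)).
      * rewrite (lsum_ext _ _ (fun s => if Nat.eqb s L then Cb - Vb - INR L * V else 0)).
        -- rewrite lsum_ind by auto.
           rewrite (proj2 (run_out (t-L) (t-1) _ t ltac:(lia))), (proj2 (run_in (t-L) (t-1) _ (t-1) ltac:(lia))).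
           subst eta. ring.
        -- intros s Hs. destruct (Nat.eqb_spec s L) as [->|]; ring.
      * intros s Hs. destruct (HS s Hs) as [? [? ?]].
        replace (t - s - 1)%nat with ((t - s) - 1)%nat by lia. rewrite run_jump by lia.
        destruct (Nat.eqb_spec (t - s) (t - L)); destruct (Nat.eqb_spec (t - s) (S (t - 1)));
        destruct (Nat.eqb_spec s L); try lia; ring.
    + intros k Hk. apply run_jump0; lia.
    + rewrite run_jump by lia. rewrite (proj2 (Nat.eqb_neq t (t - L))) by lia.
      replace (S (t-1)) with t by lia. rewrite Nat.eqb_refl. lra.
Qed.

Lemma valid_fwd_P T L l Cb Cu V Vb Sl eta t z :
  V > 0 -> Vb > 0 -> NoDup Sl ->
  (forall s, In s Sl -> (1 <= s <= L)%nat /\ (t + s + 1 <= T)%nat /\ INR s * V <= Cb - Vb) ->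
  0 <= eta -> eta <= INR L -> eta * V <= Cb - Vb -> (1 <= t <= T - 1)%nat ->
  inP T L l Cb Cu V Vb z -> fst z t <= rhs_fwd Cb V Vb eta Sl t z.
Proof.
  intros HV HVb Hnd HS He0 HeL HeC Ht HP.
  destruct HP as [H0 [Hb [Hi [Hii [Hiii [Hiv Hv]]]]]].
  set (y := snd z) in *. set (x := fst z) in *.
  assert (yv : forall k, (1 <= k <= T)%nat -> y k = 0 \/ y k = 1) by (intros; apply Hb; auto).
  assert (xnn : forall k, (1 <= k <= T)%nat -> 0 <= x k) by (intros; apply Hb; auto).
  assert (xb : forall k, (1 <= k <= T)%nat -> x k <= Cb * y k) by (intros k Hk; destruct (Hiii k Hk); lra).
  assert (BackOn : forall u, y u = 1 -> y (u + 1)%nat = 0 -> (u + 1 <= T)%nat ->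
            forall m, (m < L)%nat -> (m + 1 <= u)%nat -> y (u - m)%nat = 1).
  { intros u Yu Yu1 HuT. induction m as [|m IH]; intros Hm Hmu.
    - rewrite Nat.sub_0_r. exact Yu.
    - specialize (IH ltac:(lia) ltac:(lia)).
      destruct (yv (u - S m)%nat ltac:(lia)) as [Z|Z]; [|exact Z].
      assert (Hc := Hi (u - m)%nat (u + 1)%nat ltac:(lia) ltac:(lia)).
      replace (u - m - 1)%nat with (u - S m)%nat in Hc by lia.
      rewrite Z, IH, Yu1 in Hc. lra. }
  set (st := fun s => y (t + s)%nat = 1 /\ y (t + s + 1)%nat = 0).
  assert (F1 : forall s, In s Sl -> st s -> forall k, (t + s + 1 <= k + L)%nat -> (k <= t + s)%nat -> (1 <= k)%nat -> y k = 1).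
  { intros s Hs [E1 E2] k Hk1 Hk2 Hk3. destruct (HS s Hs) as [[Hs1 Hs2] [Hs3 Hs4]].
    replace k with (t + s - (t + s - k))%nat by lia.
    apply BackOn; auto; lia. }
  assert (Uq : forall s1 s2, In s1 Sl -> In s2 Sl -> st s1 -> st s2 -> s1 = s2).
  { intros s1 s2 H1 H2 S1 S2.
    destruct (HS s1 H1) as [[? ?] [? ?]]. destruct (HS s2 H2) as [[? ?] [? ?]].
    destruct (lt_eq_lt_dec s1 s2) as [[Hlt|Heq]|Hgt]; auto.
    - assert (E := F1 s2 H2 S2 (t + s1 + 1)%nat ltac:(lia) ltac:(lia) ltac:(lia)). destruct S1 as [_ S1]. lra.
    - assert (E := F1 s1 H1 S1 (t + s2 + 1)%nat ltac:(lia) ltac:(lia) ltac:(lia)). destruct S2 as [_ S2]. lra. }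
  set (c := fun s => Cb - Vb - INR s * V).
  assert (Tnp : forall s, In s Sl -> ~ st s -> c s * (y (t + s)%nat - y (t + s + 1)%nat) <= 0).
  { intros s Hs Hn. destruct (HS s Hs) as [[? ?] [? ?]].
    assert (D : y (t + s)%nat - y (t + s + 1)%nat <= 0).
    { destruct (yv (t + s)%nat ltac:(lia)) as [A|A]; destruct (yv (t + s + 1)%nat ltac:(lia)) as [B|B];
        rewrite A, B; try lra; exfalso; apply Hn; split; auto. }
    assert (0 <= c s) by (unfold c; lra). nra. }
  unfold rhs_fwd. fold y.
  set (LS := lsum Sl (fun s => c s * (y (t + s)%nat - y (t + s + 1)%nat))).
  change (lsum Sl (fun s => (Cb - Vb - INR s * V) * (y (t + s)%nat - y (t + s + 1)%nat))) with LS.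
  destruct (classic (exists s0, In s0 Sl /\ st s0)) as [[s0 [Hs0 Hst]]|Hno].
  - assert (HLS : LS <= c s0).
    { unfold LS. rewrite <- (lsum_ind Sl s0 (c s0)) by auto. apply lsum_le. intros s Hs.
      destruct (Nat.eqb_spec s s0) as [->|Hne].
      - destruct Hst as [A B]. rewrite A, B. lra.
      - apply Tnp; auto. }
    destruct (HS s0 Hs0) as [[Hs1 Hs2] [Hs3 Hs4]].
    assert (Hy1 : y (t + 1)%nat = 1) by (apply (F1 s0 Hs0 Hst); lia).
    destruct (yv t ltac:(lia)) as [Yt|Yt].
    + assert (s0 = L).
      { destruct (Nat.eq_dec s0 L); auto. assert (E := F1 s0 Hs0 Hst t ltac:(lia) ltac:(lia) ltac:(lia)). lra. }
      subst s0. assert (x t = 0) by (assert (A := xb t ltac:(lia)); assert (B := xnn t ltac:(lia)); rewrite Yt in A; lra).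
      rewrite Yt, Hy1. unfold c in HLS. assert (eta * V <= INR L * V) by (apply Rmult_le_compat_r; lra). lra.
    + set (b := (t + s0)%nat).
      destruct Hst as [Yb Yb1].
      assert (Hx1 : x (b + 1)%nat <= 0).
      { assert (A := xb (b + 1)%nat ltac:(unfold b; lia)). unfold b in *. rewrite Yb1 in A. lra. }
      assert (Ch : forall j, (j <= s0)%nat -> x (b - j)%nat <= Vb + INR j * V).
      { induction j as [|j IH]; intros Hj.
        - rewrite Nat.sub_0_r. assert (A := Hv (b + 1)%nat ltac:(unfold b; lia)).
          replace (b + 1 - 1)%nat with b in A by lia. unfold b in *.
          rewrite Yb1 in A. simpl. lra.
        - assert (A := Hv (b - j)%nat ltac:(unfold b in *; lia)).
          replace (b - j - 1)%nat with (b - S j)%nat in A by lia.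
          assert (Ybj : y (b - j)%nat = 1).
          { apply (F1 s0 Hs0 (conj Yb Yb1)); unfold b in *; lia. }
          rewrite Ybj in A. rewrite S_INR. specialize (IH ltac:(lia)). lra. }
      assert (Hxt := Ch s0 ltac:(lia)). replace (b - s0)%nat with t in Hxt by (unfold b; lia).
      rewrite Yt, Hy1. unfold c in HLS. lra.
  - assert (HLS : LS <= 0).
    { unfold LS. rewrite <- (lsum_zero Sl). apply lsum_le. intros s Hs. apply Tnp; auto.
      intros Hst. apply Hno. exists s; auto. }
    assert (HeV : 0 <= eta * V) by nra.
    destruct (yv t ltac:(lia)) as [Yt|Yt].
    + assert (x t = 0) by (assert (A := xb t ltac:(lia)); assert (B := xnn t ltac:(lia)); rewrite Yt in A; lra).
      destruct (yv (t+1)%nat ltac:(lia)) as [Y1|Y1]; rewrite Yt, Y1; lra.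
    + destruct (yv (t+1)%nat ltac:(lia)) as [Y1|Y1].
      * assert (A := Hv (t + 1)%nat ltac:(lia)). replace (t + 1 - 1)%nat with t in A by lia.
        rewrite Y1 in A.
        assert (B := xb (t+1)%nat ltac:(lia)). rewrite Y1 in B. rewrite Yt, Y1. lra.
      * assert (A := xb t ltac:(lia)). rewrite Yt, Y1. rewrite Yt in A. lra.
Qed.

Lemma run_jumpf a b f k : (1 <= a <= b)%nat -> (1 <= k)%nat ->
  snd (runpt a b f) k - snd (runpt a b f) (k + 1)%nat =
  (if Nat.eqb k b then 1 else 0) - (if Nat.eqb (S k) a then 1 else 0).
Proof.
  intros Hab Hk. unfold runpt; cbn [fst snd].
  destruct (Nat.eqb_spec k b); destruct (Nat.eqb_spec (S k) a);
  destruct (Nat.leb_spec a k); destruct (Nat.leb_spec k b);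
  destruct (Nat.leb_spec a (k+1)); destruct (Nat.leb_spec (k+1) b); cbn [andb]; try lra; lia.
Qed.

Lemma run_jumpf0 a b f k : (1 <= a <= b)%nat -> (1 <= k)%nat -> k <> b -> S k <> a ->
  snd (runpt a b f) k - snd (runpt a b f) (k + 1)%nat = 0.
Proof.
  intros H1 H2 H3 H4. rewrite run_jumpf by auto.
  rewrite (proj2 (Nat.eqb_neq k b)), (proj2 (Nat.eqb_neq (S k) a)) by auto. ring.
Qed.

Lemma INR_max_step k t : (1 <= k)%nat ->
  0 <= INR (Nat.max k t) - INR (Nat.max (k-1) t) <= 1.
Proof.
  intros Hk. destruct (le_lt_dec k t).
  - rewrite Nat.max_r by lia. rewrite Nat.max_r by lia. lra.
  - rewrite Nat.max_l by lia. rewrite Nat.max_l by lia.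
    destruct k as [|k]; [lia|]. replace (S k - 1)%nat with k by lia. rewrite S_INR. lra.
Qed.

Section Fwd.
Variables (T L l : nat) (Cb Cu V Vb eta : R) (Sl : list nat) (t : nat).
Hypotheses (HCu : Cu > 0) (HV : V > 0) (HCuVb : Cu < Vb) (HVbV : Vb + V <= Cb) (HVbCuV : Vb < Cu + V).
Hypothesis Hnd : NoDup Sl.
Hypothesis HS : forall s, In s Sl -> (1 <= s <= L)%nat /\ (t + s + 1 <= T)%nat /\ INR s * V <= Cb - Vb.
Hypothesis Ht : (1 <= t <= T - 1)%nat.

Let r := rhs_fwd Cb V Vb eta Sl t.

Lemma rf_eval (z : point) (g : nat -> R) :
  (forall s, In s Sl -> snd z (t + s)%nat - snd z (t + s + 1)%nat = g s) ->
  r z = (Vb + eta * V) * snd z t + (Cb - Vb - eta * V) * snd z (t + 1)%nat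
        - lsum Sl (fun s => (Cb - Vb - INR s * V) * g s).
Proof.
  intros H. unfold r, rhs_fwd. f_equal. apply lsum_ext. intros s Hs. rewrite H; auto.
Qed.

Lemma rf_allon : r (runpt 1 T (fun _ => Cb)) = Cb.
Proof.
  rewrite (rf_eval _ (fun _ => 0)).
  - rewrite (lsum_ext _ _ (fun _ => 0)) by (intros; ring). rewrite lsum_zero.
    rewrite (proj2 (run_in 1 T _ t ltac:(lia))), (proj2 (run_in 1 T _ (t+1) ltac:(lia))). ring.
  - intros s Hs. destruct (HS s Hs) as [? [? ?]]. apply run_jumpf0; lia.
Qed.

Variable Qt : point.
Hypotheses (QtP : inP T L l Cb Cu V Vb Qt) (QtF : fst Qt t = r Qt)
  (QtJ0 : forall k, (1 <= k < t)%nat -> snd Qt k - snd Qt (k+1)%nat = 0)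
  (QtJ1 : snd Qt t - snd Qt (t+1)%nat <> 0).

Definition slopef (b : nat) : nat -> R := fun k => Vb + (INR b - INR (Nat.max k t)) * V.

Definition Qf (b : nat) : point :=
  if Nat.ltb b t then runpt 1 b (fun _ => Cu)
  else if Nat.eqb b t then Qt
  else if in_dec Nat.eq_dec (b - t)%nat Sl then runpt 1 b (slopef b)
  else runpt (b+1) T (fun _ => Cu).

Lemma Qf_prop b : (1 <= b <= T - 1)%nat ->
  inP T L l Cb Cu V Vb (Qf b) /\ fst (Qf b) t = r (Qf b) /\
  (forall k, (1 <= k < b)%nat -> snd (Qf b) k - snd (Qf b) (k+1)%nat = 0) /\
  snd (Qf b) b - snd (Qf b) (b+1)%nat <> 0.
Proof.
  intros Hb. unfold Qf.
  destruct (Nat.ltb_spec b t) as [Hbt|Hbt].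
  { split; [|split; [|split]].
    - apply runpt_inP; try lra; try lia; intros; lra.
    - rewrite (proj1 (run_out 1 b _ t ltac:(lia))).
      rewrite (rf_eval _ (fun _ => 0)).
      + rewrite (lsum_ext _ _ (fun _ => 0)) by (intros; ring). rewrite lsum_zero.
        rewrite (proj2 (run_out 1 b _ t ltac:(lia))), (proj2 (run_out 1 b _ (t+1) ltac:(lia))). ring.
      + intros s Hs. destruct (HS s Hs) as [? [? ?]]. apply run_jumpf0; lia.
    - intros k Hk. apply run_jumpf0; lia.
    - rewrite run_jumpf by lia. rewrite Nat.eqb_refl, (proj2 (Nat.eqb_neq (S b) 1)) by lia. lra. }
  destruct (Nat.eqb_spec b t) as [->|Hbt'].
  { split; [|split; [|split]]; auto. }
  destruct (in_dec Nat.eq_dec (b - t)%nat Sl) as [Hin|Hnin].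
  { destruct (HS _ Hin) as [? [? Hc]]. rewrite minus_INR in Hc by lia.
    split; [|split; [|split]].
    - apply runpt_inP; try lra; try lia.
      + intros k Hk. unfold slopef.
        assert (INR t <= INR (Nat.max k t)) by (apply le_INR; lia).
        assert (INR (Nat.max k t) <= INR b) by (apply le_INR; lia).
        split; nra.
      + intros _. unfold slopef. rewrite Nat.max_l by lia. lra.
      + intros k Hk. unfold slopef. destruct (INR_max_step k t ltac:(lia)). split; nra.
    - rewrite (proj1 (run_in 1 b _ t ltac:(lia))).
      rewrite (rf_eval _ (fun s => if Nat.eqb s (b - t) then 1 else 0)).
      + rewrite (lsum_ext _ _ (fun s => if Nat.eqb s (b - t) then Cb - Vb - INR (b - t) * V else 0)).
        * rewrite lsum_ind by auto.
          rewrite (proj2 (run_in 1 b _ t ltac:(lia))), (proj2 (run_in 1 b _ (t+1) ltac:(lia))).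
          unfold slopef. rewrite Nat.max_id, minus_INR by lia. ring.
        * intros s Hs. destruct (Nat.eqb_spec s (b-t)) as [->|]; ring.
      + intros s Hs. destruct (HS s Hs) as [? [? ?]].
        rewrite run_jumpf by lia.
        rewrite (proj2 (Nat.eqb_neq (S (t + s)) 1)) by lia.
        destruct (Nat.eqb_spec (t + s) b); destruct (Nat.eqb_spec s (b - t)); try lia; ring.
    - intros k Hk. apply run_jumpf0; lia.
    - rewrite run_jumpf by lia. rewrite Nat.eqb_refl, (proj2 (Nat.eqb_neq (S b) 1)) by lia. lra. }
  split; [|split; [|split]].
  - apply runpt_inP; try lra; try lia; intros; lra.
  - rewrite (proj1 (run_out (b+1) T _ t ltac:(lia))).
    rewrite (rf_eval _ (fun _ => 0)).
    + rewrite (lsum_ext _ _ (fun _ => 0)) by (intros; ring). rewrite lsum_zero.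
      rewrite (proj2 (run_out (b+1) T _ t ltac:(lia))), (proj2 (run_out (b+1) T _ (t+1) ltac:(lia))). ring.
    + intros s Hs. destruct (HS s Hs) as [? [? ?]].
      apply run_jumpf0; try lia.
      intros E. apply Hnin. replace (b - t)%nat with s by lia. exact Hs.
  - intros k Hk. apply run_jumpf0; lia.
  - rewrite run_jumpf by lia. rewrite (proj2 (Nat.eqb_neq b T)) by lia.
    replace (S b) with (b + 1)%nat by lia. rewrite Nat.eqb_refl. lra.
Qed.

Hypothesis Hvalid : valid (conv (inP T L l Cb Cu V Vb)) (fun z => fst z t) r.

Lemma fwd_facet : facet_defining (conv (inP T L l Cb Cu V Vb)) (fun z => fst z t) r.
Proof.
  apply (facet_gen T L l Cb Cu V Vb t r (fun m => Qf (T - m)) (fun m => (T - m)%nat) (fun m => (T - m + 1)%nat));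
    try lia; try lra; auto.
  - apply LinY_fwd.
  - apply rf_allon.
  - intros m Hm. destruct (Qf_prop (T - m) ltac:(lia)) as [A [B _]]. auto.
  - intros m m' H1 H2 H3. destruct (Qf_prop (T - m') ltac:(lia)) as [_ [_ [C _]]].
    apply C. lia.
  - intros m Hm. destruct (Qf_prop (T - m) ltac:(lia)) as [_ [_ [_ D]]]. exact D.
Qed.

End Fwd.

Lemma fwd_main T L l Cb Cu V Vb Sl eta t :
  Cu > 0 -> V > 0 -> Cu < Vb -> Vb + V <= Cb -> Vb < Cu + V -> NoDup Sl ->
  (forall s, In s Sl -> (1 <= s <= L)%nat /\ (t + s + 1 <= T)%nat /\ INR s * V <= Cb - Vb) ->
  0 <= eta -> eta <= INR L -> eta * V <= Cb - Vb -> (1 <= t <= T - 1)%nat ->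
  valid (conv (inP T L l Cb Cu V Vb)) (fun z => fst z t) (rhs_fwd Cb V Vb eta Sl t) /\
  ((eta = 0 \/ eta = (Cb - Vb) / V \/ (eta = INR L /\ In L Sl)) ->
   facet_defining (conv (inP T L l Cb Cu V Vb)) (fun z => fst z t) (rhs_fwd Cb V Vb eta Sl t)).
Proof.
  intros HCu HV HCuVb HVbV HVbCuV Hnd HS He0 HeL HeC Ht.
  assert (Hval : valid (conv (inP T L l Cb Cu V Vb)) (fun z => fst z t) (rhs_fwd Cb V Vb eta Sl t)).
  { apply valid_conv; [apply LinY_fwd|]. intros z Hz.
    apply (valid_fwd_P T L l Cb Cu V Vb Sl eta t z); auto; lra. }
  split; [exact Hval|]. intros [E|[E|[E HL]]].
  - apply (fwd_facet T L l Cb Cu V Vb eta Sl t HCu HV HCuVb HVbV HVbCuV Hnd HS Ht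
             (runpt 1 t (fun _ => Vb))); auto.
    + apply runpt_inP; try lra; try lia; intros; lra.
    + rewrite (proj1 (run_in 1 t _ t ltac:(lia))).
      rewrite (rf_eval _ _ _ _ _ _ _ (fun _ => 0)).
      * rewrite (lsum_ext _ _ (fun _ => 0)) by (intros; ring). rewrite lsum_zero.
        rewrite (proj2 (run_in 1 t _ t ltac:(lia))), (proj2 (run_out 1 t _ (t+1) ltac:(lia))).
        subst eta. ring.
      * intros s Hs. destruct (HS s Hs) as [? [? ?]]. apply run_jumpf0; lia.
    + intros k Hk. apply run_jumpf0; lia.
    + rewrite run_jumpf by lia. rewrite Nat.eqb_refl, (proj2 (Nat.eqb_neq (S t) 1)) by lia. lra.
  - assert (EV : eta * V = Cb - Vb) by (subst eta; field; lra).
    apply (fwd_facet T L l Cb Cu V Vb eta Sl t HCu HV HCuVb HVbV HVbCuV Hnd HS Ht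
             (runpt (t+1) T (fun _ => Cu))); auto.
    + apply runpt_inP; try lra; try lia; intros; lra.
    + rewrite (proj1 (run_out (t+1) T _ t ltac:(lia))).
      rewrite (rf_eval _ _ _ _ _ _ _ (fun _ => 0)).
      * rewrite (lsum_ext _ _ (fun _ => 0)) by (intros; ring). rewrite lsum_zero.
        rewrite (proj2 (run_out (t+1) T _ t ltac:(lia))), (proj2 (run_in (t+1) T _ (t+1) ltac:(lia))).
        rewrite EV. ring.
      * intros s Hs. destruct (HS s Hs) as [? [? ?]]. apply run_jumpf0; lia.
    + intros k Hk. apply run_jumpf0; lia.
    + rewrite run_jumpf by lia. rewrite (proj2 (Nat.eqb_neq t T)) by lia.
      replace (S t) with (t + 1)%nat by lia. rewrite Nat.eqb_refl. lra.
  - destruct (HS L HL) as [HL1 [HL2 HL3]].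
    apply (fwd_facet T L l Cb Cu V Vb eta Sl t HCu HV HCuVb HVbV HVbCuV Hnd HS Ht
             (runpt (t+1) (t+L) (fun _ => Cu))); auto.
    + apply runpt_inP; try lra; try lia; intros; lra.
    + rewrite (proj1 (run_out (t+1) (t+L) _ t ltac:(lia))).
      rewrite (rf_eval _ _ _ _ _ _ _ (fun s => if Nat.eqb s L then 1 else 0)).
      * rewrite (lsum_ext _ _ (fun s => if Nat.eqb s L then Cb - Vb - INR L * V else 0)).
        -- rewrite lsum_ind by auto.
           rewrite (proj2 (run_out (t+1) (t+L) _ t ltac:(lia))), (proj2 (run_in (t+1) (t+L) _ (t+1) ltac:(lia))).
           subst eta. ring.
        -- intros s Hs. destruct (Nat.eqb_spec s L) as [->|]; ring.
      * intros s Hs. destruct (HS s Hs) as [? [? ?]].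
        rewrite run_jumpf by lia.
        destruct (Nat.eqb_spec (t + s) (t + L)); destruct (Nat.eqb_spec (S (t + s)) (t + 1));
        destruct (Nat.eqb_spec s L); try lia; ring.
    + intros k Hk. apply run_jumpf0; lia.
    + rewrite run_jumpf by lia. rewrite (proj2 (Nat.eqb_neq t (t + L))) by lia.
      replace (S t) with (t + 1)%nat by lia. rewrite Nat.eqb_refl. lra.
Qed.

Lemma int_bound (s : nat) (Cb Vb V : R) : V > 0 ->
  (Z.of_nat s <= Int_part ((Cb - Vb) / V))%Z -> INR s * V <= Cb - Vb.
Proof.
  intros HV H. destruct (base_Int_part ((Cb - Vb) / V)) as [H1 _].
  apply IZR_le in H. rewrite <- INR_IZR_INZ in H.
  assert (INR s <= (Cb - Vb) / V) by lra.
  apply Rmult_le_compat_r with (r := V) in H0; [|lra].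
  replace ((Cb - Vb) / V * V) with (Cb - Vb) in H0 by (field; lra). exact H0.
Qed.

Theorem proposition5
  (T L l : nat) (Cb Cu V Vb : R)
  (hT : (1 <= T)%nat) (hL : (1 <= L)%nat) (hl : (1 <= l)%nat)
  (hCbCu : Cb > Cu) (hCu : Cu > 0) (hV : V > 0) (hVbV : Vb + V <= Cb)
  (hCuVb : Cu < Vb) (hVbCuV : Vb < Cu + V)
  (Sl : list nat) (hSnd : NoDup Sl)
  (hS : forall s, In s Sl ->
          (1 <= s)%nat /\ (s <= L)%nat /\ (s <= T - 2)%nat /\
          (Z.of_nat s <= Int_part ((Cb - Vb) / V))%Z)
  (eta : R) (heta0 : 0 <= eta) (hetaL : eta <= INR L)
  (hetaC : eta <= (Cb - Vb) / V) :
  let C := conv (inP T L l Cb Cu V Vb) in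
  let facet_cond := eta = 0 \/ eta = (Cb - Vb) / V \/ (eta = INR L /\ In L Sl) in
  (forall t : nat, (2 <= t <= T)%nat -> (forall s, In s Sl -> (s + 2 <= t)%nat) ->
     valid C (fun z => fst z t) (rhs_back Cb V Vb eta Sl t) /\
     (facet_cond -> facet_defining C (fun z => fst z t) (rhs_back Cb V Vb eta Sl t))) /\
  (forall t : nat, (1 <= t <= T - 1)%nat -> (forall s, In s Sl -> (t <= T - s - 1)%nat) ->
     valid C (fun z => fst z t) (rhs_fwd Cb V Vb eta Sl t) /\
     (facet_cond -> facet_defining C (fun z => fst z t) (rhs_fwd Cb V Vb eta Sl t))).
Proof.
  intros C facet_cond. unfold C, facet_cond.
  assert (HeC : eta * V <= Cb - Vb).
  { apply Rmult_le_compat_r with (r := V) in hetaC; [|lra].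
    replace ((Cb - Vb) / V * V) with (Cb - Vb) in hetaC by (field; lra). exact hetaC. }
  split.
  - intros t Ht Hst. apply back_main; auto.
    intros s Hs. destruct (hS s Hs) as [H1 [H2 [H3 H4]]].
    split; [lia|]. split; [apply Hst; exact Hs|]. apply int_bound; auto.
  - intros t Ht Hst. apply fwd_main; auto.
    intros s Hs. destruct (hS s Hs) as [H1 [H2 [H3 H4]]]. specialize (Hst s Hs).
    split; [lia|]. split; [lia|]. apply int_bound; auto.
Qed.
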